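(* Let $m\ge1$ be an integer, let $G_0$ be a regular conditional distribution of $X_0$ given $\{X_i:0<|i|\le m\}$ (also written as a distribution function $G_0(y)$), and suppose there exist a set $A\in\mathcal F$ with $P(A)>0$ and real numbers $\varepsilon\in(0,1/2)$, $a\le\xi_p\le b$ such that for all $\omega\in A$, $G_0((a-\varepsilon,a])>\varepsilon$ and $G_0((b,b+\varepsilon])>\varepsilon$. Then $P(G_0(\xi_p)=1)<p$.
   Context: $\{X_i\}_{i\in\mathbb{Z}}$ is a strictly stationary real sequence on $(\Omega,\mathcal F,P)$ with marginal distribution function $F$; $p\in(0,1)$, $\xi_p=\inf\{x:F(x)\ge p\}$, and $F(\xi_p)=p$ (e.g. $F$ continuous at $\xi_p$). *)

(* Defs.v *)
From HB Require Import structures.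
From mathcomp Require Import all_boot all_order all_algebra.
From mathcomp Require Import all_classical all_reals all_analysis.
From mathcomp Require Import measurable_realfun.
Set Implicit Arguments. Unset Strict Implicit. Unset Printing Implicit Defensive.
Import Order.TTheory GRing.Theory Num.Theory.
Local Open Scope classical_set_scope.
Local Open Scope ring_scope.

(* Strict stationarity of a real sequence (X_i)_{i in Z}: all finite-dimensional
   distributions are shift invariant (stated on measurable rectangles, which
   determine the finite-dimensional laws). *)
Definition strictly_stationary d (Omega : measurableType d) (R : realType)
  (P : probability Omega R) (X : int -> Omega -> R) : Prop :=
  forall (n : nat) (t : 'I_n -> int) (B : 'I_n -> set R) (k : int),
    (forall j, measurable (B j)) ->
    P (\bigcap_(j in [set: 'I_n]) (X (t j) @^-1` B j)) =
    P (\bigcap_(j in [set: 'I_n]) (X (t j + k) @^-1` B j)).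

Definition marginal_cdf d (Omega : measurableType d) (R : realType)
  (P : probability Omega R) (X : int -> Omega -> R) (x : R) : R :=
  fine (P (X 0 @^-1` `]-oo, x])).

Definition quantile (R : realType) (F : R -> R) (p : R) : R :=
  inf [set x | p <= F x].

Definition neigh_gen d (Omega : measurableType d) (R : realType)
  (X : int -> Omega -> R) (m : nat) : set (set Omega) :=
  [set E | exists i : int, exists B : set R,
     [/\ (0 < `|i| <= m%:Z)%R, measurable B & E = X i @^-1` B]].

Definition sub_measurable d (Omega : measurableType d) (R : realType)
  (G : set (set Omega)) (f : Omega -> \bar R) : Prop :=
  forall Y : set (\bar R), measurable Y -> <<s G >> (f @^-1` Y).

Definition is_rcd d (Omega : measurableType d) (R : realType)
  (P : probability Omega R) (X : int -> Omega -> R) (m : nat)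
  (G0 : Omega -> probability R R) : Prop :=
  (forall B : set R, measurable B ->
     sub_measurable (neigh_gen X m) (fun w => G0 w B)) /\
  (forall (B : set R) (E : set Omega), measurable B -> <<s neigh_gen X m >> E ->
     P (E `&` X 0 @^-1` B) = (\int[P]_(w in E) G0 w B)%E).

(* Main.v *)
Require Import Defs.
From HB Require Import structures.
From mathcomp Require Import all_boot all_order all_algebra.
From mathcomp Require Import all_classical all_reals all_analysis.
From mathcomp Require Import measurable_realfun.
Import Order.TTheory GRing.Theory Num.Theory.
Local Open Scope classical_set_scope.
Local Open Scope ring_scope.


Theorem mainTheorem5 (d : measure_display) (Omega : measurableType d)
  (R : realType) (P : probability Omega R) (X : int -> Omega -> R)
  (p : R) (m : nat) (G0 : Omega -> probability R R)
  (A : set Omega) (eps a b : R) :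
  (forall i, measurable_fun setT (X i)) ->
  strictly_stationary P X ->
  0 < p < 1 ->
  marginal_cdf P X (quantile (marginal_cdf P X) p) = p ->
  (1 <= m)%N ->
  is_rcd P X m G0 ->
  measurable A -> (0 < P A)%E ->
  0 < eps < 1 / 2 ->
  a <= quantile (marginal_cdf P X) p <= b ->
  (forall w, A w ->
     (eps%:E < G0 w `](a - eps)%R, a]%classic)%E /\ (eps%:E < G0 w `]b, (b + eps)%R]%classic)%E) ->
  (P [set w | G0 w `]-oo, quantile (marginal_cdf P X) p]%classic = 1%E] < p%:E)%E.
Proof.
move=> hX _ _ hF _ [hmeas hint] mA PA0 /andP[e0 _] /andP[axi xib] hA.
set xi := quantile (marginal_cdf P X) p.
set B := `]-oo, xi]%classic.
have mB : measurable B by exact: measurable_itv.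
set g := fun w => G0 w B.
set S := [set w | g w = 1%E].
have Gsub : <<s neigh_gen X m >> `<=` measurable.
  apply: smallest_sub; first exact: sigma_algebra_measurable.
  move=> E [i [C [_ mC ->]]].
  by have := hX i measurableT C mC; rewrite setTI.
have mg : measurable_fun setT g.
  move=> _ Y mY; rewrite setTI; apply: Gsub; exact: hmeas.
have gS : <<s neigh_gen X m >> S by exact: (hmeas B mB [set 1%E] (emeasurable_set1 _)).
have mS : measurable S by apply: Gsub.
have gSc : <<s neigh_gen X m >> (~` S).
  by exact: (hmeas B mB (~` [set 1%E]) (measurableC (emeasurable_set1 _))).
have mSc : measurable (~` S) by apply: Gsub.
set Y := X 0 @^-1` B.
have mY : measurable Y by have := hX 0 measurableT B mB; rewrite setTI.
have g0 : forall w, (0 <= g w)%E by move=> w; exact: measure_ge0.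
have h1 : P (S `&` Y) = P S.
  rewrite hint //.
  rewrite (eq_integral (cst 1%E)); last first.
    by move=> w; rewrite inE.
  by rewrite integral_cst // mul1e.
have AS : A `<=` ~` S.
  move=> w /hA [_ hb] Sw.
  have hd : B `&` `]b, (b + eps)%R]%classic = set0.
    apply/seteqP; split => // x [hx]; move: hx; rewrite /B /= !in_itv /= => hx /andP[bx _].
    by have := lt_le_trans bx (le_trans hx xib); rewrite ltxx.
  have := measureU (G0 w) mB (measurable_itv _) hd.
  have := probability_le1 (G0 w) (measurableU _ _ mB (measurable_itv `]b, (b + eps)%R])).
  move=> le1 equ; rewrite equ in le1.
  have SwB : G0 w B = 1%E := Sw.
  have I0 : (0 < G0 w `]b, (b + eps)%R]%classic)%E.
    by apply: lt_trans hb; rewrite lte_fin.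
  have le2 : (G0 w B + G0 w `]b, (b + eps)%R]%classic <= 1)%E := le1.
  by move: le2; rewrite SwB leNgt lteDl // I0.
have h2 : (0 < P (~` S `&` Y))%E.
  rewrite hint //.
  apply: (@lt_le_trans _ _ (eps%:E * P A)%E); first exact: mule_gt0.
  rewrite -integral_cst //.
  apply: (le_trans _ (ge0_subset_integral _ mA mSc _ _ AS)) => //; last first.
    by apply: measurable_funS mg.
  apply: ge0_le_integral => //.
  - by move=> x _; rewrite lee_fin ltW.
  - exact: measurable_funS mg.
  - move=> w /hA [ha _]; apply: ltW; apply: (lt_le_trans ha).
    apply: le_measure; rewrite ?inE //.
    by move=> x /=; rewrite !in_itv /= => /andP[_ xa]; exact: le_trans xa axi.
have hY : P Y = p%:E.
  rewrite -hF /marginal_cdf fineK //; exact: fin_num_measure.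
have e1 : P Y = (P (~` S `&` Y) + P (S `&` Y))%E.
  by rewrite (measureDI P mY mS) setDE [Y `&` ~` S]setIC [Y `&` S]setIC.
rewrite -hY e1 h1 addeC lteDl //; exact: fin_num_measure.
Qed.
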